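(* Let $A,B$ be partially ordered sets, let $G,G'$ be games over $A$, and let $H$ be a passable game over $B$. Then (a) $G\lhd G'$ implies $G+H\lhd G'+H$; and (b) $G\le G'$ implies $G+H\le G'+H$.
   Context: Games over a poset $A$ are defined inductively: for each $a\in A$ there is an atomic game $[a]$, which has no options; and if $L$ and $R$ are non-empty sets of games, then $\{L\mid R\}$ is a composite game with left options $L$ and right options $R$. The relations $\le$ and $\lhd$ are defined by simultaneous recursion: $G\le H$ iff (1) every left option $G^L$ of $G$ satisfies $G^L\lhd H$, (2) every right option $H^R$ of $H$ satisfies $G\lhd H^R$, and (3) if $G$ or $H$ is atomic then $G\lhd H$; and $G\lhd H$ iff (1) some right option $G^R$ of $G$ satisfies $G^R\le H$, or (2) some left option $H^L$ of $H$ satisfies $G\le H^L$, or (3) $G=[a]$, $H=[b]$ are atomic and $a\le b$. A game $G$ is passable if $G\lhd G$ and recursively all its options are passable. For a game $G$ over $A$ and $H$ over $B$, the sum $G+H$ is the game over $A\times B$ (with the componentwise order) defined recursively by $[a]+[b]=[(a,b)]$ when both are atomic, and otherwise $G+H=\{G^L+H,\,G+H^L\mid G^R+H,\,G+H^R\}$, where $G^L,G^R,H^L,H^R$ range over the left and right options of $G$ and $H$ (atomic games contributing no options). *)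

(* Defs.v *)
From HB Require Import structures.
From mathcomp Require Import all_boot all_order.
Set Implicit Arguments. Unset Strict Implicit. Unset Printing Implicit Defensive.

(* A game over A: either an atom [a], or {L | R} where the left (resp. right)
   options are given by a family indexed by a non-empty type. *)
Inductive game (A : Type) : Type :=
| Atom : A -> game A
| Comp : forall (IL : Type) (L : IL -> game A) (IR : Type) (R : IR -> game A),
    inhabited IL -> inhabited IR -> game A.

Arguments Atom {A} a.
Arguments Comp {A} IL L IR R _ _.

(* Simultaneous recursion: cmp r G H = (G <= H, G <| H), for the order r on atoms. *)
Fixpoint cmp (A : Type) (r : rel A) (G : game A) {struct G} : game A -> Prop * Prop :=
  fix cmpG (H : game A) {struct H} : Prop * Prop :=
  let lhd :=
    (match G with
     | Comp _ _ IR GR _ _ => exists j : IR, (cmp r (GR j) H).1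
     | Atom _ => False end)
    \/ (match H with
        | Comp IL HL _ _ _ _ => exists i : IL, (cmpG (HL i)).1
        | Atom _ => False end)
    \/ (match G, H with
        | Atom a, Atom b => r a b
        | _, _ => False end) in
  let le :=
    (match G with
     | Comp IL GL _ _ _ _ => forall i : IL, (cmp r (GL i) H).2
     | Atom _ => True end)
    /\ (match H with
        | Comp _ _ IR HR _ _ => forall j : IR, (cmpG (HR j)).2
        | Atom _ => True end)
    /\ ((match G with Atom _ => True | _ => False end
         \/ match H with Atom _ => True | _ => False end) -> lhd) in
  (le, lhd).

Definition game_le (A : Type) (r : rel A) (G H : game A) : Prop := (cmp r G H).1.
Definition game_lhd (A : Type) (r : rel A) (G H : game A) : Prop := (cmp r G H).2.

Fixpoint passable (A : Type) (r : rel A) (G : game A) : Prop :=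
  game_lhd r G G /\
  match G with
  | Atom _ => True
  | Comp _ L _ R _ _ => (forall i, passable r (L i)) /\ (forall j, passable r (R j))
  end.

Lemma inhabited_inl (X Y : Type) : inhabited X -> inhabited (X + Y).
Proof. by case=> x; constructor; left. Qed.

Fixpoint gsum (A B : Type) (G : game A) {struct G} : game B -> game (A * B) :=
  match G with
  | Atom a =>
      fix sH (H : game B) : game (A * B) :=
        match H with
        | Atom b => Atom (a, b)
        | Comp IL HL IR HR hl hr => Comp IL (fun i => sH (HL i)) IR (fun j => sH (HR j)) hl hr
        end
  | Comp GIL GL GIR GR gl gr =>
      fix sH (H : game B) : game (A * B) :=
        match H with
        | Atom b =>
            Comp GIL (fun i => gsum (GL i) (Atom b)) GIR (fun j => gsum (GR j) (Atom b)) gl gr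
        | Comp HIL HL HIR HR hl hr =>
            Comp (GIL + HIL)%type
              (fun s => match s with inl i => gsum (GL i) H | inr k => sH (HL k) end)
              (GIR + HIR)%type
              (fun s => match s with inl j => gsum (GR j) H | inr k => sH (HR k) end)
              (inhabited_inl HIL gl) (inhabited_inl HIR gr)
        end
  end.

Definition prod_le (dA dB : Order.disp_t) (A : porderType dA) (B : porderType dB) : rel (A * B) :=
  fun x y => ((x.1 <= y.1)%O && (x.2 <= y.2)%O).

(* Main.v *)
Require Import Defs.
From mathcomp Require Import all_boot all_order.
Set Implicit Arguments. Unset Strict Implicit. Unset Printing Implicit Defensive.

Section Gen.
Variable X : Type.
Implicit Types (G H K : game X) (P Q R : game X -> Prop).

Definition allL G P : Prop := match G with Atom _ => True | Comp _ L _ _ _ _ => forall i, P (L i) end.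
Definition allR G P : Prop := match G with Atom _ => True | Comp _ _ _ R _ _ => forall i, P (R i) end.
Definition exL G P : Prop := match G with Atom _ => False | Comp _ L _ _ _ _ => exists i, P (L i) end.
Definition exR G P : Prop := match G with Atom _ => False | Comp _ _ _ R _ _ => exists i, P (R i) end.
Definition isAt G : Prop := match G with Atom _ => True | _ => False end.
Definition atr (r : rel X) G H : Prop := match G, H with Atom a, Atom b => r a b | _, _ => False end.

Lemma allL2 G P Q R : allL G P -> allL G Q -> (forall x, P x -> Q x -> R x) -> allL G R.
Proof. by case: G => //= ? ? ? ? ? ? h1 h2 h i; apply: h. Qed.
Lemma allR2 G P Q R : allR G P -> allR G Q -> (forall x, P x -> Q x -> R x) -> allR G R.
Proof. by case: G => //= ? ? ? ? ? ? h1 h2 h i; apply: h. Qed.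
Lemma allL1 G P R : allL G P -> (forall x, P x -> R x) -> allL G R.
Proof. by case: G => //= ? ? ? ? ? ? h1 h i; apply: h. Qed.
Lemma allR1 G P R : allR G P -> (forall x, P x -> R x) -> allR G R.
Proof. by case: G => //= ? ? ? ? ? ? h1 h i; apply: h. Qed.
Lemma exL2 G P Q R : exL G P -> allL G Q -> (forall x, P x -> Q x -> R x) -> exL G R.
Proof. by case: G => //= ? ? ? ? ? ? [i h1] h2 h; exists i; apply: h. Qed.
Lemma exR2 G P Q R : exR G P -> allR G Q -> (forall x, P x -> Q x -> R x) -> exR G R.
Proof. by case: G => //= ? ? ? ? ? ? [i h1] h2 h; exists i; apply: h. Qed.
Lemma allL_self G (Q : game X -> game X -> Prop) :
  allL G (fun y => Q y y) -> allL G (fun y => exL G (fun z => Q y z)).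
Proof. by case: G => //= ? ? ? ? ? ? h i; exists i. Qed.
Lemma allR_self G (Q : game X -> game X -> Prop) :
  allR G (fun y => Q y y) -> allR G (fun y => exR G (fun z => Q y z)).
Proof. by case: G => //= ? ? ? ? ? ? h i; exists i. Qed.

Lemma game_ind2 P : (forall G, allL G P -> allR G P -> P G) -> forall G, P G.
Proof. move=> h; elim=> [a|IL L IHL IR R IHR hl hr]; by apply: h. Qed.

Definition lhdF r G H := exR G (fun x => game_le r x H) \/ exL H (fun y => game_le r G y) \/ atr r G H.

Lemma cmpE r G H : cmp r G H =
  (allL G (fun x => game_lhd r x H) /\ allR H (fun y => game_lhd r G y) /\
   (isAt G \/ isAt H -> lhdF r G H), lhdF r G H).
Proof. by case: G => [a|? ? ? ? ? ?]; case: H => [b|? ? ? ? ? ?]. Qed.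

Lemma leE r G H : game_le r G H <-> allL G (fun x => game_lhd r x H) /\ allR H (fun y => game_lhd r G y) /\
   (isAt G \/ isAt H -> game_lhd r G H).
Proof. by rewrite /game_le /game_lhd cmpE. Qed.

Lemma lhdE r G H : game_lhd r G H <-> lhdF r G H.
Proof. by rewrite /game_lhd cmpE. Qed.

Lemma passE r H : passable r H <-> game_lhd r H H /\ allL H (passable r) /\ allR H (passable r).
Proof. by case: H => [a|? ? ? ? ? ?] /=; split; case=> [? ?]. Qed.
End Gen.

Section Sum.
Variables (A B : Type).
Implicit Types (G : game A) (H : game B) (P : game (A * B) -> Prop).

Lemma allL_sum P G H : allL (gsum G H) P <-> allL G (fun x => P (gsum x H)) /\ allL H (fun y => P (gsum G y)).
Proof.
case: G => [a|? ? ? ? ? ?]; case: H => [b|? ? ? ? ? ?] /=; try by intuition.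
split; first by move=> h; split=> i; [exact: (h (inl i))|exact: (h (inr i))].
by case=> h1 h2 [i|i].
Qed.
Lemma allR_sum P G H : allR (gsum G H) P <-> allR G (fun x => P (gsum x H)) /\ allR H (fun y => P (gsum G y)).
Proof.
case: G => [a|? ? ? ? ? ?]; case: H => [b|? ? ? ? ? ?] /=; try by intuition.
split; first by move=> h; split=> i; [exact: (h (inl i))|exact: (h (inr i))].
by case=> h1 h2 [i|i].
Qed.
Lemma exL_sum P G H : exL (gsum G H) P <-> exL G (fun x => P (gsum x H)) \/ exL H (fun y => P (gsum G y)).
Proof.
case: G => [a|? ? ? ? ? ?]; case: H => [b|? ? ? ? ? ?] /=; try by intuition.
split; first by case=> [[i|i] h]; [left|right]; exists i.
by case=> [[i h]|[i h]]; [exists (inl i)|exists (inr i)].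
Qed.
Lemma exR_sum P G H : exR (gsum G H) P <-> exR G (fun x => P (gsum x H)) \/ exR H (fun y => P (gsum G y)).
Proof.
case: G => [a|? ? ? ? ? ?]; case: H => [b|? ? ? ? ? ?] /=; try by intuition.
split; first by case=> [[i|i] h]; [left|right]; exists i.
by case=> [[i h]|[i h]]; [exists (inl i)|exists (inr i)].
Qed.
Lemma isAt_sum G H : isAt (gsum G H) -> isAt G /\ isAt H.
Proof. by case: G => [a|? ? ? ? ? ?]; case: H => [b|? ? ? ? ? ?]. Qed.
End Sum.

Section Main.
Variables (dA dB : Order.disp_t) (A : porderType dA) (B : porderType dB).
Local Notation rA := (<=%O : rel A).
Local Notation rB := (<=%O : rel B).
Local Notation rP := (@prod_le _ _ A B).

Lemma relab (a a' : A) : (a <= a')%O -> forall K K' : game B,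
  (game_lhd rB K K' -> game_lhd rP (gsum (Atom a) K) (gsum (Atom a') K')) /\
  (game_le rB K K' -> game_le rP (gsum (Atom a) K) (gsum (Atom a') K')).
Proof.
move=> haa; elim/game_ind2=> K IKL IKR; elim/game_ind2=> K' IK'L IK'R.
have hl : game_lhd rB K K' -> game_lhd rP (gsum (Atom a) K) (gsum (Atom a') K').
  move/lhdE=> [h|[h|h]]; apply/lhdE.
  - left; apply/exR_sum; right; apply: (exR2 h IKR) => x h1 h2; exact: ((h2 K').2).
  - right; left; apply/exL_sum; right; apply: (exL2 h IK'L) => x h1 h2; exact: h2.2.
  - right; right; move: h; clear -haa; case: K => [b|? ? ? ? ? ?]; case: K' => [b'|? ? ? ? ? ?] //=.
    by rewrite /prod_le /= haa.
split=> // /leE [h1 [h2 h3]]; apply/leE; split; [|split].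
- apply/allL_sum; split=> //; apply: (allL2 h1 IKL) => x H1 H2; exact: (H2 K').1.
- apply/allR_sum; split=> //; apply: (allR2 h2 IK'R) => x H1 H2; exact: H2.1.
- move=> hh; apply: hl; apply: h3; case: hh => /isAt_sum [_ ?]; tauto.
Qed.

Lemma main : forall H : game B, passable rB H -> forall G G' : game A,
  (game_lhd rA G G' -> game_lhd rP (gsum G H) (gsum G' H)) /\
  (game_le rA G G' -> game_le rP (gsum G H) (gsum G' H)).
Proof.
elim/game_ind2=> H IHL IHR /passE [hHH [pL pR]].
have IL : allL H (fun y => forall G G' : game A,
  (game_lhd rA G G' -> game_lhd rP (gsum G y) (gsum G' y)) /\
  (game_le rA G G' -> game_le rP (gsum G y) (gsum G' y))).
  by apply: (allL2 IHL pL) => x h1 h2; apply: h1.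
have IR : allR H (fun y => forall G G' : game A,
  (game_lhd rA G G' -> game_lhd rP (gsum G y) (gsum G' y)) /\
  (game_le rA G G' -> game_le rP (gsum G y) (gsum G' y))).
  by apply: (allR2 IHR pR) => x h1 h2; apply: h1.
elim/game_ind2=> G IGL IGR; elim/game_ind2=> G' IG'L IG'R.
have ha : game_lhd rA G G' -> game_lhd rP (gsum G H) (gsum G' H).
  move/lhdE=> [h|[h|h]].
  - apply/lhdE; left; apply/exR_sum; left; apply: (exR2 h IGR) => x h1 h2; exact: ((h2 G').2).
  - apply/lhdE; right; left; apply/exL_sum; left; apply: (exL2 h IG'L) => x h1 h2; exact: h2.2.
  - move: h; clear -hHH; case: G => [a|? ? ? ? ? ?]; case: G' => [a'|? ? ? ? ? ?] //= h.
    exact: ((relab h H H).1 hHH).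
split=> // /leE [h1 [h2 h3]]; apply/leE; split; [|split].
- apply/allL_sum; split.
  + apply: (allL2 h1 IGL) => x H1 H2; exact: ((H2 G').1).
  + have hs : allL H (fun y => exL H (fun z => game_le rP (gsum G y) (gsum G' z))).
      apply: (allL_self (Q := fun y z => game_le rP (gsum G y) (gsum G' z))).
      refine (allL1 IL _) => y hy; apply: (hy G G').2; exact/leE.
    refine (allL1 hs _) => y hy.
    by apply/lhdE; right; left; apply/exL_sum; right.
- apply/allR_sum; split.
  + apply: (allR2 h2 IG'R) => x H1 H2; exact: H2.1.
  + have hs : allR H (fun y => exR H (fun z => game_le rP (gsum G z) (gsum G' y))).
      apply: (allR_self (Q := fun y z => game_le rP (gsum G z) (gsum G' y))).
      refine (allR1 IR _) => y hy; apply: (hy G G').2; exact/leE.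
    refine (allR1 hs _) => y hy.
    by apply/lhdE; left; apply/exR_sum; right.
- move=> hh; apply: ha; apply: h3; case: hh => /isAt_sum [? _]; tauto.
Qed.
End Main.

Theorem proposition8p4 (dA dB : Order.disp_t) (A : porderType dA) (B : porderType dB)
  (G G' : game A) (H : game B) :
  passable (<=%O : rel B) H ->
  (game_lhd (<=%O : rel A) G G' -> game_lhd (@prod_le _ _ A B) (gsum G H) (gsum G' H)) /\
  (game_le (<=%O : rel A) G G' -> game_le (@prod_le _ _ A B) (gsum G H) (gsum G' H)).
Proof. by move=> hp; apply: main. Qed.
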